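(* Let $A$ be a $\boldsymbol{\mathit{ba}\ell}$-algebra, $a\in A$ and $s\in\mathbb R$ with $a+s\ge0$. Then the set $\{rx_{\lnot I}\mid r\in\mathbb R,\ I\in{\sf Arch}(A),\ (a+s-r)^-\in I\}$ is bounded above in $D(\mathbb R[B])$ (by $\|a\|+s+1$), so its join exists there, and the element $$-s+\bigvee\{rx_{\lnot I}\mid r\in\mathbb R,\ I\in{\sf Arch}(A),\ (a+s-r)^-\in I\}$$ does not depend on the choice of $s$ with $a+s\ge 0$. Hence $\alpha:A\to D(\mathbb R[B])$ given by this formula is a well-defined map.
   Context: A $\boldsymbol{\mathit{ba}\ell}$-algebra is a commutative unital lattice-ordered algebra $A$ over $\mathbb R$ that is bounded (for every $a\in A$ there is an integer $n\ge1$ with $a\le n\cdot1$) and archimedean (if $na\le b$ for all $n\ge1$ then $a\le0$); reals $r$ are identified with $r\cdot1$. For $a\in A$: $a^+=a\vee0$, $a^-=(-a)\vee0$, $|a|=a\vee(-a)$, $\|a\|=\inf\{r\in\mathbb R\mid |a|\le r\}$. An $\ell$-ideal is a ring ideal $I$ with $|a|\le|b|$, $b\in I\Rightarrow a\in I$; it is archimedean if $A/I$ is archimedean. ${\sf Arch}(A)$ is the set of archimedean $\ell$-ideals ordered by inclusion; it is a bounded distributive lattice (indeed a frame) with meet $\cap$ and with join $I\vee J$ the least archimedean $\ell$-ideal containing $I\cup J$. $B$ is the free boolean extension of the bounded distributive lattice ${\sf Arch}(A)$ (a boolean algebra generated by ${\sf Arch}(A)$ as a bounded sublattice, such that every bounded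 lattice homomorphism from ${\sf Arch}(A)$ to a boolean algebra extends uniquely to a boolean homomorphism); ${\sf Arch}(A)\subseteq B$ and $\lnot$ denotes complement in $B$. For a boolean algebra $B$, $\mathbb R[B]$ is the quotient of the polynomial ring $\mathbb R[x_e\mid e\in B]$ by the ideal generated by $x_{e\wedge f}-x_ex_f$, $x_{e\vee f}-(x_e+x_f-x_ex_f)$, $x_{\lnot e}-(1-x_e)$, $x_0$ ($e,f\in B$); it is a $\boldsymbol{\mathit{ba}\ell}$-algebra and $e\mapsto x_e$ is a boolean isomorphism onto its idempotents. $D(\mathbb R[B])$ is its Dedekind completion: the (unique up to isomorphism) Dedekind complete $\boldsymbol{\mathit{ba}\ell}$-algebra containing $\mathbb R[B]$ as a $\boldsymbol{\mathit{ba}\ell}$-subalgebra such that each of its elements is a join of elements of $\mathbb R[B]$. *)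

(* Defs.v *)
From HB Require Import structures.
From mathcomp Require Import all_boot all_order all_algebra.
From mathcomp Require Import classical_sets reals.

Set Implicit Arguments.
Unset Strict Implicit.
Unset Printing Implicit Defensive.

Import Order.TTheory GRing.Theory Num.Theory.
Local Open Scope ring_scope.

(* A commutative unital R-algebra is a commutative ring [A] together   *)
(* with a unital ring morphism [sc : R -> A] (scalar r * a := sc r * a)*)

Section BalDef.
Variable R : realType.
Variable A : comPzRingType.
Variable sc : R -> A.
Variables (join meet : A -> A -> A).

Definition bal_le (x y : A) : Prop := join x y = y.

Record isBal : Prop := {
  sc_add : forall r s, sc (r + s) = sc r + sc s;
  sc_mul : forall r s, sc (r * s) = sc r * sc s;
  sc_one : sc 1 = 1;
  joinC : forall x y, join x y = join y x;
  meetC : forall x y, meet x y = meet y x;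
  joinA : forall x y z, join x (join y z) = join (join x y) z;
  meetA : forall x y z, meet x (meet y z) = meet (meet x y) z;
  join_meet : forall x y, join x (meet x y) = x;
  meet_join : forall x y, meet x (join x y) = x;
  le_add : forall x y z, bal_le x y -> bal_le (x + z) (y + z);
  le_mul : forall x y, bal_le 0 x -> bal_le 0 y -> bal_le 0 (x * y);
  le_scale : forall r x, 0 <= r -> bal_le 0 x -> bal_le 0 (sc r * x);
  bal_bounded : forall x, exists n : nat, bal_le x (n.+1)%:R;
  bal_archimedean : forall x y,
      (forall n : nat, bal_le (x *+ n.+1) y) -> bal_le x 0
}.
End BalDef.

Record balAlg (R : realType) := BalAlg {
  bcar :> comPzRingType;
  bsc : R -> bcar;
  bjoin : bcar -> bcar -> bcar;
  bmeet : bcar -> bcar -> bcar;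
  bal_axioms : isBal bsc bjoin bmeet
}.

Section BalOps.
Variable R : realType.
Variable A : balAlg R.

Definition ble (x y : A) : Prop := bal_le (@bjoin R A) x y.
Definition bpos (x : A) : A := bjoin x 0.
Definition bneg (x : A) : A := bjoin (- x) 0.
Definition babs (x : A) : A := bjoin x (- x).
Definition bnorm (x : A) : R := inf [set r : R | ble (babs x) (bsc A r)].

Definition isJoin (S : A -> Prop) (z : A) : Prop :=
  (forall y, S y -> ble y z) /\ (forall u, (forall y, S y -> ble y u) -> ble z u).

Definition dedekind_complete : Prop :=
  forall S : A -> Prop, (exists y, S y) -> (exists u, forall y, S y -> ble y u) ->
    exists z, isJoin S z.

Definition l_ideal (I : A -> Prop) : Prop :=
  [/\ I 0,
      (forall x y, I x -> I y -> I (x + y)),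
      (forall x y, I y -> I (x * y)) &
      (forall x y, ble (babs x) (babs y) -> I y -> I x)].

(* archimedean ℓ-ideal: A/I archimedean.  In A/I, [x] <= [y] iff
   [join x y] = [y] iff join x y - y \in I. *)
Definition arch_ideal (I : A -> Prop) : Prop :=
  l_ideal I /\
  (forall x y, (forall n : nat, I (bjoin (x *+ n.+1) y - y)) -> I (bjoin x 0 - 0)).

Definition archT : Type := {I : A -> Prop | arch_ideal I}.

Definition arch_join_set (I J : A -> Prop) : A -> Prop :=
  fun x => forall K, arch_ideal K -> (forall y, I y -> K y) -> (forall y, J y -> K y) -> K x.

End BalOps.

Definition arch_lat_hom (R : realType) (A : balAlg R) (d : Order.disp_t)
    (C : tbDistrLatticeType d) (f : archT A -> C) : Prop :=
  [/\ (forall I J K : archT A,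
         (forall x, sval K x <-> (sval I x /\ sval J x)) -> f K = Order.meet (f I) (f J)),
      (forall I J K : archT A,
         (forall x, sval K x <-> arch_join_set (sval I) (sval J) x) ->
         f K = Order.join (f I) (f J)),
      (forall K : archT A, (forall x, sval K x <-> x = 0) -> f K = Order.bottom) &
      (forall K : archT A, (forall x, sval K x) -> f K = Order.top)].

Definition bool_hom (d1 d2 : Order.disp_t) (B : ctbDistrLatticeType d1)
    (C : ctbDistrLatticeType d2) (g : B -> C) : Prop :=
  [/\ (forall x y, g (Order.meet x y) = Order.meet (g x) (g y)),
      (forall x y, g (Order.join x y) = Order.join (g x) (g y)),
      g Order.bottom = Order.bottom & g Order.top = Order.top].

Definition free_bool_ext (R : realType) (A : balAlg R) (dB : Order.disp_t)
    (B : ctbDistrLatticeType dB) (e : archT A -> B) : Prop :=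
  [/\ injective e,
      arch_lat_hom e,
      (forall P : B -> Prop, (forall I, P (e I)) ->
         (forall x y, P x -> P y -> P (Order.meet x y)) ->
         (forall x y, P x -> P y -> P (Order.join x y)) ->
         (forall x, P x -> P (Order.compl x)) ->
         P Order.bottom -> P Order.top -> forall x, P x) &
      (forall (dC : Order.disp_t) (C : ctbDistrLatticeType dC) (f : archT A -> C),
         arch_lat_hom f ->
         exists g : B -> C, [/\ bool_hom g, (forall I, g (e I) = f I) &
           (forall g' : B -> C, bool_hom g' -> (forall I, g' (e I) = f I) ->
              forall x, g' x = g x)])].

Definition rb_rel (dB : Order.disp_t) (B : ctbDistrLatticeType dB)
    (C : comPzRingType) (x : B -> C) : Prop :=
  [/\ (forall e f, x (Order.meet e f) = x e * x f),
      (forall e f, x (Order.join e f) = x e + x f - x e * x f),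
      (forall e, x (Order.compl e) = 1 - x e) &
      x Order.bottom = 0].

Definition ring_hom (C1 C2 : comPzRingType) (h : C1 -> C2) : Prop :=
  [/\ (forall a b, h (a + b) = h a + h b),
      (forall a b, h (a * b) = h a * h b) & h 1 = 1].

Definition unital_sc (R : realType) (C : comPzRingType) (sc : R -> C) : Prop :=
  [/\ (forall r s, sc (r + s) = sc r + sc s),
      (forall r s, sc (r * s) = sc r * sc s) & sc 1 = 1].

(* RB (with x : B -> RB) is R[B]: the commutative R-algebra presented by the
   generators x_e (e in B) and the relations rb_rel, i.e. the quotient of the
   polynomial ring R[x_e | e in B] by the ideal generated by the relations
   (characterized by its universal property); it carries its baℓ-structure. *)
Definition is_RB (R : realType) (dB : Order.disp_t) (B : ctbDistrLatticeType dB)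
    (RB : balAlg R) (x : B -> RB) : Prop :=
  rb_rel x /\
  (forall (C : comPzRingType) (scC : R -> C), unital_sc scC ->
   forall f : B -> C, rb_rel f ->
     exists h : RB -> C,
       [/\ ring_hom h, (forall r, h (bsc RB r) = scC r), (forall e, h (x e) = f e) &
         (forall h' : RB -> C, ring_hom h' -> (forall r, h' (bsc RB r) = scC r) ->
            (forall e, h' (x e) = f e) -> forall y, h' y = h y)]).

Definition is_dedekind_completion (R : realType) (S D : balAlg R) (j : S -> D) : Prop :=
  [/\ dedekind_complete D,
      injective j /\ ring_hom j,
      (forall r, j (bsc S r) = bsc D r),
      (forall x y, j (bjoin x y) = bjoin (j x) (j y) /\ j (bmeet x y) = bmeet (j x) (j y)) &
      (forall d : D, exists T : D -> Prop,
          (forall y, T y -> exists u, y = j u) /\ isJoin T d)].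

Definition alpha_set (R : realType) (A : balAlg R) (dB : Order.disp_t)
    (B : ctbDistrLatticeType dB) (e : archT A -> B) (RB D : balAlg R)
    (x : B -> RB) (j : RB -> D) (a : A) (s : R) : D -> Prop :=
  fun y => exists (r : R) (I : archT A),
    sval I (bneg (a + bsc A s - bsc A r)) /\
    y = j (bsc RB r * x (Order.compl (e I))).

(* Main.v *)
Require Import Defs.
From HB Require Import structures.
From mathcomp Require Import all_boot all_order all_algebra.
From mathcomp Require Import classical_sets reals.
From mathcomp Require Import ring lra.
Import Order.TTheory GRing.Theory Num.Theory.
Local Open Scope ring_scope.

Module Helpers.
Set Implicit Arguments.
Unset Strict Implicit.
Section Gen.
Variable R : realType.
Variable A : balAlg R.
Let ax := bal_axioms A.
Local Notation J := (@bjoin R A).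
Local Notation M := (@bmeet R A).
Local Notation sc := (@bsc R A).
Local Notation "x <=: y" := (@ble R A x y) (at level 70).

Lemma bleE (x y : A) : (x <=: y) = (J x y = y). Proof. by []. Qed.

Lemma bjoinxx (x : A) : J x x = x.
Proof. have := join_meet ax x (J x x). by rewrite (Defs.meet_join ax). Qed.

Lemma bmeetxx (x : A) : M x x = x.
Proof. have := meet_join ax x (M x x). by rewrite (Defs.join_meet ax). Qed.

Lemma ble_refl (x : A) : x <=: x. Proof. exact: bjoinxx. Qed.

Lemma ble_trans (x y z : A) : x <=: y -> y <=: z -> x <=: z.
Proof. rewrite !bleE => h1 h2; by rewrite -h2 (Defs.joinA ax) h1. Qed.

Lemma ble_anti (x y : A) : x <=: y -> y <=: x -> x = y.
Proof. rewrite !bleE => h1 h2; by rewrite -h1 (Defs.joinC ax). Qed.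

Lemma bjoin_l (x y : A) : x <=: J x y.
Proof. by rewrite bleE (Defs.joinA ax) bjoinxx. Qed.

Lemma bjoin_r (x y : A) : y <=: J x y.
Proof. rewrite (Defs.joinC ax); exact: bjoin_l. Qed.

Lemma bjoin_lub (x y z : A) : x <=: z -> y <=: z -> J x y <=: z.
Proof. rewrite !bleE => h1 h2; by rewrite -(Defs.joinA ax) h2 h1. Qed.

Lemma bleM (x y : A) : (x <=: y) <-> M x y = x.
Proof.
rewrite bleE; split=> h; first by rewrite -h (Defs.meet_join ax).
by rewrite -h (Defs.joinC ax) (Defs.meetC ax) (Defs.join_meet ax).
Qed.

Lemma bmeet_l (x y : A) : M x y <=: x.
Proof. apply/bleM; by rewrite (Defs.meetC ax) (Defs.meetA ax) bmeetxx. Qed.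

Lemma bmeet_r (x y : A) : M x y <=: y.
Proof. rewrite (Defs.meetC ax); exact: bmeet_l. Qed.

Lemma bmeet_glb (x y z : A) : z <=: x -> z <=: y -> z <=: M x y.
Proof. move=> /bleM h1 /bleM h2; apply/bleM; by rewrite (Defs.meetA ax) h1 h2. Qed.

Lemma ble_add (x y z : A) : x <=: y -> x + z <=: y + z.
Proof. exact: (Defs.le_add ax). Qed.

Lemma ble_addl (x y z : A) : x <=: y -> z + x <=: z + y.
Proof. rewrite ![z + _]addrC; exact: ble_add. Qed.

Lemma ble_addK (x y z : A) : x + z <=: y + z -> x <=: y.
Proof. move/(ble_add (- z)); by rewrite !addrK. Qed.

Lemma subge0 (x y : A) : (0 <=: y - x) <-> (x <=: y).
Proof.
split=> h; first by have := ble_add x h; rewrite add0r subrK.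
by have := ble_add (- x) h; rewrite subrr.
Qed.

Lemma ble_opp (x y : A) : x <=: y -> - y <=: - x.
Proof. move=> h; have := ble_add (- x - y) h.
have -> : x + (- x - y) = - y by rewrite addrA subrr add0r.
by have -> : y + (- x - y) = - x by rewrite addrC addrNK. Qed.

Lemma glb_unique (x y g : A) : g <=: x -> g <=: y ->
  (forall w, w <=: x -> w <=: y -> w <=: g) -> g = M x y.
Proof.
move=> h1 h2 h3; apply: ble_anti; first exact: bmeet_glb.
apply: h3; [exact: bmeet_l | exact: bmeet_r].
Qed.

Lemma bmeet_add (x y z : A) : M (x + z) (y + z) = M x y + z.
Proof.
symmetry; apply: glb_unique; [apply: ble_add; exact: bmeet_l|
  apply: ble_add; exact: bmeet_r|].
move=> w h1 h2; rewrite -(subrK z w); apply: ble_add.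
apply: bmeet_glb; apply: (@ble_addK _ _ z); by rewrite subrK.
Qed.

Lemma bmeet_opp (x y : A) : M x y = - J (- x) (- y).
Proof.
symmetry; apply: glb_unique.
- rewrite -{2}(opprK x); apply: ble_opp; exact: bjoin_l.
- rewrite -{2}(opprK y); apply: ble_opp; exact: bjoin_r.
move=> w h1 h2; rewrite -(opprK w); apply: ble_opp.
apply: bjoin_lub; exact: ble_opp.
Qed.

Lemma bmeet_sum (x y : A) : M x y = x + y - J x y.
Proof.
symmetry; apply: glb_unique.
- apply/subge0; have -> : x - (x + y - J x y) = J x y - y by ring.
  apply/subge0; exact: bjoin_r.
- apply/subge0; have -> : y - (x + y - J x y) = J x y - x by ring.
  apply/subge0; exact: bjoin_l.
move=> w h1 h2; apply/subge0.
have -> : x + y - J x y - w = (x + y - w) - J x y by ring.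
apply/subge0; apply: bjoin_lub.
- apply/subge0; have -> : x + y - w - x = y - w by ring.
  by apply/subge0.
- apply/subge0; have -> : x + y - w - y = x - w by ring.
  by apply/subge0.
Qed.

Lemma pos_neg (x : A) : J x 0 - J (- x) 0 = x.
Proof.
have -> : - J (- x) 0 = M x 0 by rewrite bmeet_opp oppr0.
by rewrite bmeet_sum addr0 addrC subrK.
Qed.

Lemma pos_neg_disj (x : A) : M (J x 0) (J (- x) 0) = 0.
Proof.
set p := J x 0; set q := J (- x) 0.
have h : M p q - q = - q.
  rewrite -bmeet_add subrr pos_neg.
  by rewrite bmeet_opp oppr0.
by move: h; rewrite -{2}(add0r (- q)) => /addIr.
Qed.

Lemma bge0D (x y : A) : 0 <=: x -> 0 <=: y -> 0 <=: x + y.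
Proof. move=> h1 h2; apply: ble_trans h2 _; rewrite -{1}(add0r y); exact: ble_add. Qed.

Lemma bmul_ge0 (x y : A) : 0 <=: x -> 0 <=: y -> 0 <=: x * y.
Proof. exact: (Defs.le_mul ax). Qed.

Lemma ble_mul2l (c x y : A) : 0 <=: c -> x <=: y -> c * x <=: c * y.
Proof.
move=> hc /subge0 h; apply/subge0; rewrite -mulrBr; exact: bmul_ge0.
Qed.

Lemma bsc_ge0m (r : R) (x : A) : 0 <= r -> 0 <=: x -> 0 <=: sc r * x.
Proof. exact: (Defs.le_scale ax). Qed.

Lemma bsc0 : sc 0 = 0.
Proof. have := sc_add ax 0 0; rewrite addr0 => h.
by have := congr1 (fun t => t - sc 0) h; rewrite subrr addrK. Qed.

Lemma bscD r s : sc (r + s) = sc r + sc s. Proof. exact: (sc_add ax). Qed.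
Lemma bscM r s : sc (r * s) = sc r * sc s. Proof. exact: (sc_mul ax). Qed.
Lemma bsc1 : sc 1 = 1. Proof. exact: (sc_one ax). Qed.

Lemma bscN r : sc (- r) = - sc r.
Proof. apply/eqP; rewrite -subr_eq0 opprK -bscD addNr bsc0 //. Qed.

Lemma bscB r s : sc (r - s) = sc r - sc s.
Proof. by rewrite bscD bscN. Qed.

Lemma bscn n : sc n%:R = n%:R.
Proof. elim: n => [|n IH]; first exact: bsc0.
by rewrite -natr1 bscD IH bsc1 natr1. Qed.

Lemma bscV r : r != 0 -> sc r^-1 * sc r = 1.
Proof. by move=> h; rewrite -bscM mulVf // bsc1. Qed.

Lemma disj_mul0 (u v : A) : 0 <=: u -> 0 <=: v -> M u v = 0 -> u * v = 0.
Proof.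
move=> hu hv huv.
have [n hn] := bal_bounded ax (u + v).
set N : R := n.+1%:R.
have N0 : N != 0 by rewrite pnatr_eq0.
have hN : u + v <=: sc N by rewrite /N bscn.
have Nge0 : 0 <= N^-1 by rewrite invr_ge0 ler0n.
set w := sc N^-1 * (u * v).
have w0 : 0 <=: w by apply: bsc_ge0m => //; exact: bmul_ge0.
have hw : forall a b, 0 <=: a -> 0 <=: b -> a + b <=: sc N ->
    sc N^-1 * (a * b) <=: a.
  move=> a b ha hb hab; apply/subge0.
  have hb' : b <=: sc N.
    apply: ble_trans hab; rewrite -{1}(add0r b); exact: ble_add.
  have -> : a - sc N^-1 * (a * b) = sc N^-1 * (a * (sc N - b)).
    have e1 : a = sc N^-1 * (a * sc N).
      by rewrite mulrCA bscV // mulr1.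
    rewrite {1}e1; ring.
  apply: bsc_ge0m => //; apply: bmul_ge0 => //; exact/subge0.
have w1 : w <=: u by apply: hw.
have w2 : w <=: v.
  rewrite /w [u * v]mulrC; apply: hw => //; by rewrite addrC.
have wle : w <=: 0 by rewrite -huv; exact: bmeet_glb.
have w00 : w = 0 by apply: ble_anti.
have : sc N * w = 0 by rewrite w00 mulr0.
by rewrite /w mulrA -bscM mulfV // bsc1 mul1r.
Qed.

Lemma idem_ge0 (e : A) : e * e = e -> 0 <=: e.
Proof.
move=> he.
set p := J e 0; set q := J (- e) 0.
have hp : 0 <=: p by exact: bjoin_r.
have hq : 0 <=: q by exact: bjoin_r.
have epq : e = p - q by rewrite pos_neg.
have pq0 : p * q = 0 by apply: disj_mul0 => //; exact: pos_neg_disj.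
have sq : p * p + q * q = p - q.
  have -> : p * p + q * q = (p - q) * (p - q) + (p * q) *+ 2 by ring.
  by rewrite -epq he pq0 mul0rn addr0.
have qle : q <=: p.
  apply/subge0; rewrite -sq; apply: bge0D; exact: bmul_ge0.
have qle0 : q <=: 0.
  by move: (bmeet_glb qle (ble_refl q)); rewrite /p /q pos_neg_disj.
have q0 : q = 0 by apply: ble_anti.
by rewrite epq q0 subr0.
Qed.

Lemma one_ge0 : 0 <=: (1 : A).
Proof. apply: idem_ge0; exact: mulr1. Qed.

Lemma bsc_ge0 r : 0 <= r -> 0 <=: sc r.
Proof. move=> h; rewrite -(mulr1 (sc r)); apply: bsc_ge0m => //; exact: one_ge0. Qed.

Lemma bsc_le r r' : r <= r' -> sc r <=: sc r'.
Proof. move=> h; apply/subge0; rewrite -bscB; apply: bsc_ge0; by rewrite subr_ge0. Qed.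

Lemma babs_id (u : A) : 0 <=: u -> babs u = u.
Proof.
move=> h; rewrite /babs; apply: ble_anti; last exact: bjoin_l.
apply: bjoin_lub; first exact: ble_refl.
apply: (ble_trans _ h); have := ble_opp h; by rewrite oppr0.
Qed.

Lemma bneg0 (y : A) : 0 <=: y -> bneg y = 0.
Proof. move=> h; rewrite /bneg; have := ble_opp h; by rewrite oppr0. Qed.

Lemma sc_refl (u v : R) : (1 : A) != 0 -> sc u <=: sc v -> u <= v.
Proof.
move=> h10 h; rewrite leNgt; apply/negP => hvu.
have d0 : 0 < u - v by rewrite subr_gt0.
have : 0 <=: sc (u - v)^-1 * (- sc (u - v)).
  apply: bsc_ge0m; first by rewrite invr_ge0 ltW.
  rewrite bscB opprB; exact/subge0.
rewrite mulrN bscV ?gt_eqF // => h1.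
have h2 : (1 : A) <=: 0 by have := ble_opp h1; rewrite opprK oppr0.
move/negP: h10; apply; apply/eqP; apply: ble_anti => //; exact: one_ge0.
Qed.

Lemma zero_arch : arch_ideal (fun y : A => y = 0).
Proof.
split; first split.
- by [].
- by move=> ? ? -> ->; rewrite addr0.
- by move=> ? ? ->; rewrite mulr0.
- move=> u v h hv; move: h; rewrite hv /babs oppr0 bjoinxx => h.
  have h1 : u <=: 0 := ble_trans (bjoin_l u (- u)) h.
  have h2 : - u <=: 0 := ble_trans (bjoin_r u (- u)) h.
  apply: ble_anti => //; have := ble_opp h2; by rewrite opprK oppr0.
- move=> u v h; rewrite subr0; apply: (bal_archimedean ax (y := v)) => n.
  by apply/eqP; rewrite -subr_eq0; apply/eqP.
Qed.

Lemma top_arch : arch_ideal (fun y : A => True).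
Proof. by split; first split. Qed.

End Gen.

Section Main.
Variables (R : realType) (A : balAlg R) (dB : Order.disp_t) (B : ctbDistrLatticeType dB)
  (e : archT A -> B) (RB : balAlg R) (x : B -> RB) (D : balAlg R) (j : RB -> D).
Hypotheses (He : free_bool_ext e) (Hx : is_RB x) (Hj : is_dedekind_completion j).

Lemma e_bot (K : archT A) : (forall y, sval K y <-> y = 0) -> e K = \bot%O.
Proof. by case: He => _ [_ _ h _] _ _; apply: h. Qed.

Lemma e_top (K : archT A) : (forall y, sval K y) -> e K = \top%O.
Proof. by case: He => _ [_ _ _ h] _ _; apply: h. Qed.

Lemma x_meet f g : x (Order.meet f g) = x f * x g.
Proof. by case: Hx => [[h _ _ _] _]. Qed.
Lemma x_compl f : x (Order.compl f) = 1 - x f.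
Proof. by case: Hx => [[_ _ h _] _]. Qed.
Lemma x_bot : x \bot%O = 0.
Proof. by case: Hx => [[_ _ _ h] _]. Qed.

Lemma jD u v : j (u + v) = j u + j v.
Proof. by case: Hj => _ [_ [h _ _]]. Qed.
Lemma jM u v : j (u * v) = j u * j v.
Proof. by case: Hj => _ [_ [_ h _]]. Qed.
Lemma j1 : j 1 = 1.
Proof. by case: Hj => _ [_ [_ _ h]]. Qed.
Lemma jsc r : j (bsc RB r) = bsc D r.
Proof. by case: Hj => _ _ h. Qed.
Lemma j0 : j 0 = 0.
Proof. have := jD 0 0; rewrite addr0 => h.
by have := congr1 (fun t => t - j 0) h; rewrite subrr addrK. Qed.

Lemma jB u v : j (u - v) = j u - j v.
Proof.
have h : j (- v) = - j v.
  have := jD v (- v); rewrite subrr j0 => h0.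
  by have := congr1 (fun t => t - j v) h0; rewrite sub0r addrAC subrr add0r.
by rewrite jD h.
Qed.

Definition X f := j (x f).

Lemma X_idem f : X f * X f = X f.
Proof. by rewrite /X -jM -x_meet meetxx. Qed.
Lemma X_ge0 f : ble 0 (X f).
Proof. apply: idem_ge0; exact: X_idem. Qed.
Lemma X_compl f : X (Order.compl f) = 1 - X f.
Proof. by rewrite /X x_compl jB j1. Qed.
Lemma X_le1 f : ble 0 (1 - X f).
Proof. rewrite -X_compl; exact: X_ge0. Qed.

Lemma X_bot : X \bot%O = 0.
Proof. by rewrite /X x_bot j0. Qed.
Lemma X_top : X \top%O = 1.
Proof. by rewrite -Order.CTBDistrLatticeTheory.compl0 X_compl X_bot subr0. Qed.

Lemma elt r f : j (bsc RB r * x f) = bsc D r * X f.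
Proof. by rewrite jM jsc. Qed.

Definition I0 : archT A := exist _ (fun y : A => y = 0) (zero_arch A).

Lemma eI0 : e I0 = \bot%O.
Proof. by apply: e_bot. Qed.

Lemma mem0 a s r : ble 0 (a + bsc A s - bsc A r) ->
  alpha_set e x j a s (bsc D r).
Proof.
move=> h; exists r, I0; split; first by rewrite /= bneg0.
by rewrite elt eI0 Order.CTBDistrLatticeTheory.compl0 X_top mulr1.
Qed.

Lemma shift a s s' z z' : s <= s' -> ble 0 (a + bsc A s) ->
  isJoin (alpha_set e x j a s) z -> isJoin (alpha_set e x j a s') z' ->
  z' = bsc D (s' - s) + z.
Proof.
move=> hss hs [hz1 hz2] [hz'1 hz'2].
set t := s' - s.
have t0 : 0 <= t by rewrite subr_ge0.
have eqA : forall r, a + bsc A s' - bsc A r = a + bsc A s - bsc A (r - t).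
  move=> r; rewrite /t !bscB; ring.
apply: ble_anti.
- apply: hz'2 => y [r [I [hI ->]]]; rewrite elt.
  have hS : alpha_set e x j a s (bsc D (r - t) * X (Order.compl (e I))).
    by exists (r - t), I; split; [rewrite -eqA | rewrite elt].
  have h1 := hz1 _ hS.
  apply/subge0.
  have E1 : bsc D t + z - bsc D r * X (Order.compl (e I)) =
     (z - bsc D (r - t) * X (Order.compl (e I))) +
       bsc D t * (1 - X (Order.compl (e I))).
    by rewrite (@bscB _ D r t); ring.
  rewrite {}E1.
  apply: bge0D; first exact/subge0.
  apply: bsc_ge0m => //; exact: X_le1.
- have hzt : ble z (z' - bsc D t).
    apply: hz2 => y [q [I [hI ->]]]; rewrite elt.
    set Xi := X (Order.compl (e I)).
    have hS : alpha_set e x j a s' (bsc D (q + t) * Xi).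
      exists (q + t), I; split; last by rewrite elt.
      by rewrite eqA addrK.
    have h1 := hz'1 _ hS.
    have h2 : ble (bsc D t) z'.
      apply: hz'1; apply: mem0.
      by rewrite (eqA t) subrr bsc0 subr0.
    apply/subge0.
    have hid : Xi * Xi = Xi := X_idem _.
    have -> : z' - bsc D t - bsc D q * Xi =
        Xi * (z' - bsc D (q + t) * Xi) + (1 - Xi) * (z' - bsc D t).
      have -> : Xi * (z' - bsc D (q + t) * Xi) + (1 - Xi) * (z' - bsc D t) =
          z' - bsc D t - bsc D q * Xi + (bsc D q + bsc D t) * (Xi - Xi * Xi).
        rewrite (@bscD _ D q t); ring.
      by rewrite hid subrr mulr0 addr0.
    apply: bge0D; apply: bmul_ge0.
    + exact: X_ge0.
    + exact/subge0.
    + exact: X_le1.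
    + exact/subge0.
  have := ble_addl (bsc D t) hzt; by rewrite [_ + (z' - _)]addrC subrK.
Qed.

Lemma trivial_D : (1 : A) = 0 -> forall d : D, d = 0.
Proof.
move=> h10 d.
pose K : archT A := exist _ (fun _ : A => True) (top_arch A).
have hKb : e K = \bot%O.
  apply: e_bot => y; split=> // _; by rewrite -(mulr1 y) h10 mulr0.
have hKt : e K = \top%O by apply: e_top.
have h : (1 : D) = 0 by rewrite -X_top -hKt hKb X_bot.
by rewrite -(mulr1 d) h mulr0.
Qed.

Lemma bound a s : ble 0 (a + bsc A s) ->
  forall y, alpha_set e x j a s y -> ble y (bsc D (bnorm a + s + 1)).
Proof.
move=> hs y hy.
have [h10|h10] := eqVneq (1 : A) 0.
  have hD := trivial_D h10.
  by rewrite /ble /bal_le (hD y) (hD (bsc D _)) bjoinxx.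
set E : set R := (fun r : R => ble (babs a) (bsc A r)).
have hE0 : (E !=set0)%classic.
  have [n hn] := bal_bounded (bal_axioms A) (babs a).
  exists n.+1%:R; rewrite /E /= bscn; exact: hn.
have hlb : lbound E (- s).
  move=> r Er; apply: (sc_refl h10).
  apply: (ble_trans _ Er); apply: (ble_trans _ (bjoin_l a (- a))).
  rewrite bscN; apply/subge0; by rewrite opprK.
have hn : bnorm a = inf E by [].
have hinf : - s <= bnorm a by rewrite hn; apply: lb_le_inf.
have c0 : 0 <= bnorm a + s + 1 by lra.
case: hy => r [I [hI ->]]; rewrite elt.
set Xi := X (Order.compl (e I)).
have hsc0 : ble 0 (bsc D (bnorm a + s + 1)) := @bsc_ge0 _ D _ c0.
case: (lerP r (bnorm a + s + 1)) => hr.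
- case: (lerP 0 r) => hr0.
  + apply: (@ble_trans _ _ _ (bsc D r)); last exact: bsc_le.
    apply/subge0; have -> : bsc D r - bsc D r * Xi = bsc D r * (1 - Xi) by ring.
    apply: bsc_ge0m => //; exact: X_le1.
  + apply: (ble_trans _ hsc0).
    apply/subge0; rewrite sub0r -mulNr -bscN; apply: bsc_ge0m; [lra | exact: X_ge0].
- have [rho Erho hrho] := inf_adherent (@ltr01 R) (conj hE0 (ex_intro _ _ hlb)).
  rewrite -hn in hrho.
  set d := r - s - rho.
  have d0 : 0 < d by rewrite /d; lra.
  set b := bneg (a + bsc A s - bsc A r).
  have hb0 : ble 0 b by exact: bjoin_r.
  have hdb : ble (bsc A d) b.
    apply: (ble_trans _ (bjoin_l _ _)).
    apply/subge0.
    have -> : - (a + bsc A s - bsc A r) - bsc A d = bsc A rho - a.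
      by rewrite /d !bscB; ring.
    apply/subge0; exact: (ble_trans (bjoin_l a (- a)) Erho).
  have [[_ _ hmul hconv] _] := svalP I.
  have hId : sval I (bsc A d).
    apply: (hconv _ b); last exact: hI.
    rewrite (babs_id hb0) babs_id //; apply: bsc_ge0; exact: ltW.
  have hI1 : sval I 1.
    by have := hmul (bsc A d^-1) _ hId; rewrite bscV // gt_eqF.
  have hIall : forall y, sval I y by move=> y0; have := hmul y0 _ hI1; rewrite mulr1.
  rewrite /Xi (e_top hIall) Order.CTBDistrLatticeTheory.compl1 X_bot mulr0; exact: hsc0.
Qed.

Lemma mainsec :
  (forall (a : A) (s : R), ble 0 (a + bsc A s) ->
     (forall y, alpha_set e x j a s y -> ble y (bsc D (bnorm a + s + 1))) /\
     (exists z, isJoin (alpha_set e x j a s) z)) /\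
  (forall (a : A) (s s' : R) (z z' : D),
     ble 0 (a + bsc A s) -> ble 0 (a + bsc A s') ->
     isJoin (alpha_set e x j a s) z -> isJoin (alpha_set e x j a s') z' ->
     - bsc D s + z = - bsc D s' + z').
Proof.
split.
- move=> a s hs; split; first exact: bound.
  case: Hj => dc _ _ _ _; apply: dc.
  + exists (bsc D 0); apply: mem0; by rewrite bsc0 subr0.
  + exists (bsc D (bnorm a + s + 1)); exact: bound.
- move=> a s s' z z' hs hs' hz hz'.
  case: (lerP s s') => h.
  + rewrite (shift h hs hz hz') (@bscB _ D); ring.
  + rewrite (shift (ltW h) hs' hz' hz) (@bscB _ D); ring.
Qed.

End Main.

End Helpers.

Theorem mainTheorem5 (R : realType) (A : balAlg R)
    (dB : Order.disp_t) (B : ctbDistrLatticeType dB) (e : archT A -> B)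
    (RB : balAlg R) (x : B -> RB) (D : balAlg R) (j : RB -> D) :
  free_bool_ext e -> is_RB x -> is_dedekind_completion j ->
  (forall (a : A) (s : R), ble 0 (a + bsc A s) ->
     (forall y, alpha_set e x j a s y -> ble y (bsc D (bnorm a + s + 1))) /\
     (exists z, isJoin (alpha_set e x j a s) z)) /\
  (forall (a : A) (s s' : R) (z z' : D),
     ble 0 (a + bsc A s) -> ble 0 (a + bsc A s') ->
     isJoin (alpha_set e x j a s) z -> isJoin (alpha_set e x j a s') z' ->
     - bsc D s + z = - bsc D s' + z').
Proof.
move=> He Hx Hj; exact: (Helpers.mainsec He Hx Hj).
Qed.
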